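(* Let $m>0$ and let $u:(0,\infty)\to\mathbb{R}$ be the function such that the distribution $x\mapsto\frac{1}{2(2\pi)^3}\int_{\mathbb{R}^3}e^{ik\cdot x}\frac{1}{\sqrt{|k|^2+m^2}}\,\mathrm{d}^3k$ on $\mathbb{R}^3$ coincides with $u(|x|)$ on $x\ne0$ (explicitly, $u(r)=\frac{m}{4\pi^2r}K_1(mr)$ with $K_1$ the modified Bessel function). Let $R>0$. Then for all $r\ge R$ and all $n\in\mathbb{Z}_{\ge0}$, $$|\partial_r^nu(r)|\le C_3C_4^{n+3}\,n!\,e^{-mr},$$ where $C_4=4\max\{m,\frac1R\}$ and $C_3=\frac{2}{25m}$.
   Context: This $u$ describes the equal-time two-point function $\omega^{(0)}_2|_{x^0=x'^0=0}(x,x')=u(|x-x'|)$ of the vacuum state of a free real scalar field of mass $m$ in $3+1$-dimensional Minkowski spacetime. *)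

(* Defs.v *)
From Stdlib Require Import Reals Factorial.
From Coquelicot Require Import Coquelicot.
Open Scope R_scope.

(* Modified Bessel function of the second kind of order 1, via the standard
   integral representation  K_1(z) = \int_0^\infty e^{-z cosh t} cosh t dt  (z > 0). *)
Definition besselK1 (z : R) : R :=
  RInt_gen (fun t => exp (- z * cosh t) * cosh t)
           (at_point 0) (Rbar_locally p_infty).

Definition u_two_point (m r : R) : R :=
  m / (4 * PI ^ 2 * r) * besselK1 (m * r).

(* Main.v *)
Require Import Defs.
From Stdlib Require Import Reals Factorial.
From Coquelicot Require Import Coquelicot.
From Stdlib Require Import Lra Lia Psatz Classical FunctionalExtensionality.
Open Scope R_scope.

Lemma exp_le' x y : x <= y -> exp x <= exp y.
Proof. intros H; destruct (Rle_lt_or_eq_dec _ _ H) as [H1|H1]. 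
  apply Rlt_le, exp_increasing; auto. subst; lra. Qed.

Lemma pow_le_fact_exp z N : 0 <= z -> z ^ N <= INR (fact N) * exp z.
Proof.
  intros Hz. pose proof (exp_ge_taylor z N Hz) as H.
  assert (z ^ N / INR (fact N) <= sum_f_R0 (fun k => z ^ k / INR (fact k)) N).
  { destruct N. simpl. lra. rewrite tech5.
    assert (0 <= sum_f_R0 (fun k => z ^ k / INR (fact k)) N).
    { apply cond_pos_sum. intros n. apply Rmult_le_pos. apply pow_le; auto.
      apply Rlt_le, Rinv_0_lt_compat, INR_fact_lt_0. } lra. }
  pose proof (INR_fact_lt_0 N).
  assert (z ^ N / INR (fact N) <= exp z) by lra.
  apply (Rmult_le_compat_l (INR (fact N))) in H2; [|lra].
  replace (INR (fact N) * (z ^ N / INR (fact N))) with (z^N) in H2 by (field; lra). auto.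
Qed.

Lemma cosh_ge_1 t : 1 <= cosh t.
Proof. unfold cosh. pose proof (exp_ineq1_le t). pose proof (exp_ineq1_le (-t)). lra. Qed.

Lemma cosh_ge_t t : 0 <= t -> t <= cosh t.
Proof. intros Ht. unfold cosh. pose proof (exp_ge_taylor t 2 Ht). simpl in H.
  pose proof (exp_pos (-t)).
  replace (1 / 1 + t * 1 / 1 + t * (t * 1) / (1 + 1)) with (1 + t + t*t/2) in H by field. nra. Qed.

Lemma cosh_pos t : 0 < cosh t.
Proof. pose proof (cosh_ge_1 t); lra. Qed.

Lemma exp_taylor2 y : Rabs (exp y - 1 - y) <= y ^ 2 * exp (Rabs y).
Proof.
  replace (y^2) with (y*y) by ring.
  destruct (Rle_or_lt 0 y) as [Hy|Hy].
  - rewrite (Rabs_pos_eq y Hy). pose proof (exp_ineq1_le y).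
    rewrite Rabs_pos_eq by lra.
    destruct (Rle_or_lt 1 y).
    + pose proof (exp_pos y). assert (1 <= y*y) by nra. assert (0 <= (y*y-1)*exp y) by (apply Rmult_le_pos; lra). nra.
    + pose proof (exp_ineq1_le (-y)). rewrite exp_Ropp in H1.
      pose proof (exp_pos y).
      assert (1 - y <= / exp y) by lra.
      apply (Rmult_le_compat_l (exp y)) in H3; [|lra].
      rewrite Rinv_r in H3 by lra. assert (exp y * (1 - y) * (1 + y) <= 1 + y) by (apply (Rmult_le_compat_r (1+y)) in H3; lra). nra.
  - rewrite (Rabs_left y Hy). pose proof (exp_ineq1_le y).
    rewrite Rabs_pos_eq by lra.
    pose proof (exp_ineq1_le (-y)). pose proof (exp_pos y). pose proof (exp_pos (-y)).
    assert (exp y * exp (-y) = 1) by (rewrite <- exp_plus; replace (y + - y) with 0 by ring; apply exp_0).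
    nra.
Qed.

Lemma cont_d (f : R -> R) x : ex_derive f x -> continuous f x.
Proof. intros H. apply (ex_derive_continuous (K := R_AbsRing) (V := R_NormedModule)). auto. Qed.

Lemma exRc (f : R -> R) a b : (forall t, continuous f t) -> ex_RInt f a b.
Proof. intros H. apply (ex_RInt_continuous (V := R_CompleteNormedModule)). intros; auto. Qed.

Lemma RChasles (f : R -> R) a b c : ex_RInt f a b -> ex_RInt f b c -> RInt f a b + RInt f b c = RInt f a c.
Proof. intros. apply (RInt_Chasles (V := R_CompleteNormedModule)); auto. Qed.

Lemma RIpoint (f : R -> R) a : RInt f a a = 0.
Proof. apply (RInt_point (V := R_CompleteNormedModule)). Qed.

Definition conv (F : R -> R) (L : R) :=
  forall eps, 0 < eps -> exists B, forall b, B <= b -> Rabs (F b - L) < eps.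

Lemma mono_conv (F : R -> R) C :
  (forall b b', 0 <= b <= b' -> F b <= F b') -> (forall b, 0 <= b -> F b <= C) ->
  exists L, conv F L /\ (forall b, 0 <= b -> F b <= L) /\ L <= C.
Proof.
  intros Hm HC.
  set (E := fun v => exists b, 0 <= b /\ v = F b).
  assert (HE : bound E). { exists C. intros v [b [Hb ->]]. auto. }
  assert (HE0 : exists v, E v). { exists (F 0). exists 0. split; auto; lra. }
  destruct (completeness E HE HE0) as [L [HL1 HL2]].
  exists L. split; [|split].
  - intros eps Heps.
    assert (exists b0, 0 <= b0 /\ L - eps < F b0).
    { apply NNPP. intros Hn. assert (L <= L - eps); [|lra].
      apply HL2. intros v [b [Hb ->]]. apply Rnot_lt_le. intros Hlt. apply Hn. exists b; auto. }
    destruct H as [b0 [Hb0 Hlt]]. exists b0. intros b Hb.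
    assert (F b0 <= F b) by (apply Hm; lra).
    assert (F b <= L) by (apply HL1; exists b; split; auto; lra).
    rewrite Rabs_left1 by lra. lra.
  - intros b Hb. apply HL1. exists b; auto.
  - apply HL2. intros v [b [Hb ->]]. auto.
Qed.

Lemma bridge (f : R -> R) L :
  (forall t, continuous f t) -> conv (fun b => RInt f 0 b) L ->
  is_RInt_gen f (at_point 0) (Rbar_locally p_infty) L.
Proof.
  intros Hc Hcv P [eps Heps].
  destruct (Hcv eps (cond_pos eps)) as [B HB].
  apply Filter_prod with (Q := fun x => x = 0) (R := fun y => B < y).
  - reflexivity.
  - exists B. auto.
  - intros x y -> Hy. exists (RInt f 0 y). split.
    + apply (RInt_correct (V := R_CompleteNormedModule)). apply ex_RInt_continuous. intros; auto.
    + apply Heps. change (Rabs (RInt f 0 y - L) < eps). apply HB. lra.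
Qed.

Lemma RInt_exp_decay c lam b : 0 < lam ->
  RInt (fun t => c * exp (- lam * t)) 0 b = c / lam * (1 - exp (- lam * b)).
Proof.
  intros Hl.
  assert (H : is_RInt (fun t => c * exp (- lam * t)) 0 b
     (minus ((fun t => - c / lam * exp (- lam * t)) b) ((fun t => - c / lam * exp (- lam * t)) 0))).
  { apply (is_RInt_derive (fun t => - c / lam * exp (- lam * t))).
    - intros x _. auto_derive; auto. field. lra.
    - intros x _. apply cont_d. auto_derive. auto. }
  apply (is_RInt_unique (V := R_CompleteNormedModule)) in H. rewrite H. unfold minus, plus, opp; simpl.
  replace (- lam * 0) with 0 by ring. rewrite exp_0. field. lra.
Qed.

Lemma int_exists (f : R -> R) c lam : 0 < lam ->
  (forall t, continuous f t) ->
  (forall t, 0 <= t -> 0 <= f t <= c * exp (- lam * t)) ->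
  exists L, is_RInt_gen f (at_point 0) (Rbar_locally p_infty) L /\
     conv (fun b => RInt f 0 b) L /\ (forall b, 0 <= b -> RInt f 0 b <= L) /\
     0 <= L <= c / lam.
Proof.
  intros Hl Hc Hb.
  assert (Hex : forall a b, ex_RInt f a b) by (intros; apply exRc; auto).
  assert (Hc0 : 0 <= c). { destruct (Hb 0) as [H1 H2]; try lra. rewrite Rmult_0_r, exp_0 in H2. lra. }
  destruct (mono_conv (fun b => RInt f 0 b) (c / lam)) as [L [H1 [H2 H3]]].
  - intros b b' Hbb. simpl. rewrite <- (RChasles f 0 b b') by auto.
    assert (0 <= RInt f b b'). { apply RInt_ge_0. lra. auto. intros x Hx. apply Hb. lra. }
    change (RInt f 0 b <= RInt f 0 b + RInt f b b'). lra.
  - intros b Hb0. simpl.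
    assert (RInt f 0 b <= RInt (fun t => c * exp (- lam * t)) 0 b).
    { apply RInt_le; auto. apply exRc. intros. apply cont_d. auto_derive. auto.
      intros x Hx. apply Hb. lra. }
    rewrite RInt_exp_decay in H by auto.
    pose proof (exp_pos (- lam * b)).
    assert (c / lam * (1 - exp (- lam * b)) <= c / lam).
    { assert (0 <= c / lam) by (unfold Rdiv; apply Rmult_le_pos; [lra| apply Rlt_le, Rinv_0_lt_compat; lra]). nra. }
    lra.
  - exists L. split; [apply bridge; auto|]. split; auto. split; auto. split; auto.
    specialize (H2 0 (Rle_refl 0)). simpl in H2. rewrite RIpoint in H2. auto.
Qed.

Lemma abs_sub_le a b : Rabs (a - b) <= Rabs a + Rabs b.
Proof. unfold Rminus. eapply Rle_trans. apply Rabs_triang. rewrite Rabs_Ropp. lra. Qed.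

Lemma conv_bound3 F1 F2 F3 L1 L2 L3 h C :
  conv F1 L1 -> conv F2 L2 -> conv F3 L3 ->
  (forall b, 0 <= b -> Rabs (F1 b - F2 b + h * F3 b) <= C) ->
  Rabs (L1 - L2 + h * L3) <= C.
Proof.
  intros H1 H2 H3 HB. apply le_epsilon. intros eps Heps.
  set (e := eps / (2 + Rabs h)).
  assert (He : 0 < e). { unfold e. apply Rdiv_lt_0_compat. lra. pose proof (Rabs_pos h). lra. }
  destruct (H1 e He) as [B1 HB1]. destruct (H2 e He) as [B2 HB2]. destruct (H3 e He) as [B3 HB3].
  set (b := Rmax 0 (Rmax B1 (Rmax B2 B3))).
  assert (0 <= b /\ B1 <= b /\ B2 <= b /\ B3 <= b).
  { unfold b. repeat split; repeat (apply Rmax_Rle; (left; lra) || right); try lra;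
    apply Rle_refl || idtac. }
  destruct H as [Hb0 [Hb1 [Hb2 Hb3]]].
  specialize (HB1 b Hb1). specialize (HB2 b Hb2). specialize (HB3 b Hb3). specialize (HB b Hb0).
  assert (Rabs (L1 - L2 + h * L3) <= Rabs (F1 b - F2 b + h * F3 b) + (Rabs (F1 b - L1) + Rabs (F2 b - L2) + Rabs h * Rabs (F3 b - L3))).
  { rewrite <- Rabs_mult. 
    replace (L1 - L2 + h * L3) with ((F1 b - F2 b + h * F3 b) - ((F1 b - L1) - (F2 b - L2) + h * (F3 b - L3))) by ring.
    eapply Rle_trans. apply abs_sub_le. apply Rplus_le_compat_l.
    eapply Rle_trans. apply Rabs_triang. apply Rplus_le_compat_r.
    apply abs_sub_le. }
  assert (Rabs h * Rabs (F3 b - L3) <= Rabs h * e) by (apply Rmult_le_compat_l; [apply Rabs_pos|lra]).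
  assert (e * (2 + Rabs h) = eps) by (unfold e; field; pose proof (Rabs_pos h); lra).
  nra.
Qed.

Definition ff (k : nat) (a t : R) : R := exp (- a * cosh t) * cosh t ^ (S k).
Definition HH (k : nat) (a : R) : R := RInt_gen (ff k a) (at_point 0) (Rbar_locally p_infty).

Lemma ff_cont k a t : continuous (ff k a) t.
Proof. apply cont_d. unfold ff, cosh. auto_derive. auto. Qed.

Lemma ff_pos k a t : 0 <= ff k a t.
Proof. unfold ff. apply Rmult_le_pos. apply Rlt_le, exp_pos. apply pow_le. apply Rlt_le, cosh_pos. Qed.

Lemma Sk_le_2pow k : INR (S k) <= 2 ^ k.
Proof. induction k. simpl; lra. rewrite S_INR. rewrite S_INR in IHk. rewrite S_INR. change (2 ^ S k) with (2 * 2 ^ k). pose proof (pos_INR k). pose proof (pow_R1_Rle 2 k ltac:(lra)). lra. Qed.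

Lemma ff_bound k a rho t : 0 < rho <= 1 -> rho <= a -> 0 <= t ->
  rho ^ (S k) * ff k a t <= INR (fact k) * 6 * 4 ^ k * exp (- a) * exp (- (rho / 2) * t).
Proof.
  intros Hr Ha Ht. unfold ff. set (x := cosh t).
  assert (Hx1 : 1 <= x) by apply cosh_ge_1. assert (Hxt : t <= x) by (apply cosh_ge_t; auto).
  assert (E1 : exp (- a * x) <= exp (- a) * exp (- rho * (x - 1))).
  { rewrite <- exp_plus. apply exp_le'. nra. }
  assert (E2 : (rho * x) ^ (S k) <= 2 ^ (S k) * INR (fact (S k)) * exp (rho * x / 2)).
  { replace (rho * x) with (2 * (rho * x / 2)) at 1 by field. rewrite Rpow_mult_distr.
    rewrite Rmult_assoc. apply Rmult_le_compat_l. apply pow_le; lra.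
    apply pow_le_fact_exp. apply Rmult_le_pos; [|lra]. apply Rmult_le_pos; lra. }
  assert (E3 : exp rho <= 3). { eapply Rle_trans. apply exp_le'. apply (proj2 Hr). apply exp_le_3. }
  assert (E4 : exp (- (rho * x) / 2) <= exp (- (rho / 2) * t)). { apply exp_le'. nra. }
  assert (E5 : exp (rho * x / 2) * exp (- rho * (x - 1)) = exp rho * exp (- (rho * x) / 2)).
  { rewrite <- !exp_plus. f_equal. field. }
  assert (E6 : 2 ^ (S k) * INR (fact (S k)) <= 2 * 4 ^ k * INR (fact k)).
  { rewrite fact_simpl, mult_INR. change (2 ^ S k) with (2 * 2 ^ k).
    replace (4 ^ k) with (2 ^ k * 2 ^ k) by (rewrite <- Rpow_mult_distr; f_equal; ring).
    pose proof (Sk_le_2pow k). pose proof (INR_fact_lt_0 k). pose proof (pow_lt 2 k ltac:(lra)).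
    assert (INR (S k) * INR (fact k) <= 2 ^ k * INR (fact k)) by (apply Rmult_le_compat_r; lra).
    apply (Rmult_le_compat_l (2 * 2 ^ k)) in H2; [|lra]. lra. }
  replace (rho ^ S k * (exp (- a * x) * x ^ S k)) with ((rho*x)^S k * exp (- a * x)) by (rewrite Rpow_mult_distr; ring).
  pose proof (exp_pos (- a * x)). pose proof (exp_pos (- a)). pose proof (exp_pos (- rho * (x - 1))).
  pose proof (exp_pos (rho * x / 2)). pose proof (exp_pos rho). pose proof (exp_pos (- (rho * x) / 2)).
  pose proof (exp_pos (- (rho / 2) * t)).
  assert (P0 : 0 <= (rho * x) ^ S k) by (apply pow_le; nra).
  eapply Rle_trans. apply Rmult_le_compat_l. apply P0. apply E1.
  eapply Rle_trans. apply Rmult_le_compat_r. apply Rlt_le, Rmult_lt_0_compat; auto. apply E2.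
  replace (2 ^ S k * INR (fact (S k)) * exp (rho * x / 2) * (exp (- a) * exp (- rho * (x - 1))))
    with (2 ^ S k * INR (fact (S k)) * exp (- a) * (exp (rho * x / 2) * exp (- rho * (x - 1)))) by ring.
  rewrite E5.
  assert (0 <= 2 ^ S k * INR (fact (S k))) by (apply Rmult_le_pos; [apply pow_le; lra | apply pos_INR]).
  assert (exp rho * exp (- (rho * x) / 2) <= 3 * exp (- (rho / 2) * t)).
  { apply Rmult_le_compat; lra. }
  assert (2 ^ S k * INR (fact (S k)) * exp (- a) * (exp rho * exp (- (rho * x) / 2))
          <= 2 * 4 ^ k * INR (fact k) * exp (- a) * (3 * exp (- (rho / 2) * t))).
  { apply Rmult_le_compat. apply Rmult_le_pos; lra. apply Rmult_le_pos; lra.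
    apply Rmult_le_compat_r; lra. auto. }
  lra.
Qed.

Lemma HH_spec k a rho : 0 < rho <= 1 -> rho <= a ->
  conv (fun b => RInt (ff k a) 0 b) (HH k a) /\
  (forall b, 0 <= b -> RInt (ff k a) 0 b <= HH k a) /\
  0 <= HH k a /\ rho ^ (S k) * HH k a <= INR (fact k) * 12 * 4 ^ k * exp (- a) / rho.
Proof.
  intros Hr Ha.
  assert (Hrk : 0 < rho ^ S k) by (apply pow_lt; lra).
  destruct (int_exists (ff k a) (INR (fact k) * 6 * 4 ^ k * exp (- a) / rho ^ S k) (rho / 2))
    as [L [HL1 [HL2 [HL3 HL4]]]].
  - lra.
  - apply ff_cont.
  - intros t Ht. split. apply ff_pos. pose proof (ff_bound k a rho t Hr Ha Ht).
    unfold Rdiv. rewrite (Rmult_comm _ (/ _)), !Rmult_assoc.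
    apply (Rmult_le_reg_l (rho ^ S k)); auto. rewrite <- Rmult_assoc, Rinv_r, Rmult_1_l by lra.
    rewrite <- !Rmult_assoc. auto.
  - assert (HH k a = L).
    { unfold HH. apply (is_RInt_gen_unique (V := R_CompleteNormedModule)). auto. }
    rewrite H. split; auto. split; auto. split. lra.
    destruct HL4 as [_ HL4]. apply (Rmult_le_compat_l (rho ^ S k)) in HL4; [|lra].
    eapply Rle_trans. apply HL4. right. field. lra.
Qed.

Lemma HH_spec' k a : 0 < a ->
  conv (fun b => RInt (ff k a) 0 b) (HH k a) /\
  (forall b, 0 <= b -> RInt (ff k a) 0 b <= HH k a) /\ 0 <= HH k a.
Proof.
  intros Ha. destruct (HH_spec k a (Rmin a 1)) as [H1 [H2 [H3 _]]].
  - split. apply Rmin_glb_lt; lra. apply Rmin_r.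
  - apply Rmin_l.
  - auto.
Qed.

Lemma ff_taylor k a h t : 0 < a -> Rabs h <= a / 2 ->
  Rabs (ff k (a + h) t - ff k a t + h * ff (S k) a t) <= h ^ 2 * ff (S (S k)) (a / 2) t.
Proof.
  intros Ha Hh. unfold ff. set (x := cosh t).
  assert (Hx : 1 <= x) by apply cosh_ge_1.
  replace (exp (- (a + h) * x) * x ^ S k - exp (- a * x) * x ^ S k + h * (exp (- a * x) * x ^ S (S k)))
    with ((exp (- a * x) * x ^ S k) * (exp (- h * x) - 1 - (- h * x))).
  2:{ replace (- (a + h) * x) with (- a * x + - h * x) by ring. rewrite exp_plus. simpl. ring. }
  rewrite Rabs_mult. rewrite Rabs_pos_eq.
  2:{ apply Rmult_le_pos. apply Rlt_le, exp_pos. apply pow_le; lra. }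
  pose proof (exp_taylor2 (- h * x)).
  assert (Rabs (- h * x) <= a / 2 * x).
  { rewrite Rabs_mult, Rabs_Ropp, (Rabs_pos_eq x) by lra. apply Rmult_le_compat_r; lra. }
  assert (exp (- a * x) * exp (Rabs (- h * x)) <= exp (- (a / 2) * x)).
  { rewrite <- exp_plus. apply exp_le'. lra. }
  assert (0 <= exp (- a * x) * x ^ S k) by (apply Rmult_le_pos; [apply Rlt_le, exp_pos | apply pow_le; lra]).
  eapply Rle_trans. apply Rmult_le_compat_l. auto. apply H.
  replace ((- h * x) ^ 2) with (h ^ 2 * x ^ 2) by ring.
  replace (exp (- a * x) * x ^ S k * (h ^ 2 * x ^ 2 * exp (Rabs (- h * x))))
    with (h ^ 2 * x ^ S (S (S k)) * (exp (- a * x) * exp (Rabs (- h * x)))) by (simpl; ring).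
  replace (h ^ 2 * (exp (- (a / 2) * x) * x ^ S (S (S k))))
    with (h ^ 2 * x ^ S (S (S k)) * exp (- (a / 2) * x)) by ring.
  apply Rmult_le_compat_l; auto. apply Rmult_le_pos. apply pow2_ge_0. apply pow_le; lra.
Qed.

Lemma RInt_lin3 (f g e : R -> R) h b :
  (forall t, continuous f t) -> (forall t, continuous g t) -> (forall t, continuous e t) ->
  RInt (fun t => f t - g t + h * e t) 0 b = RInt f 0 b - RInt g 0 b + h * RInt e 0 b.
Proof.
  intros Hf Hg He.
  apply (is_RInt_unique (V := R_CompleteNormedModule)).
  apply (is_RInt_plus (V := R_NormedModule) (fun t => f t - g t) (fun t => h * e t)).
  apply (is_RInt_minus (V := R_NormedModule)); apply (RInt_correct (V := R_CompleteNormedModule)); apply exRc; auto.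
  apply (is_RInt_scal (V := R_NormedModule) e). apply (RInt_correct (V := R_CompleteNormedModule)); apply exRc; auto.
Qed.

Lemma HH_taylor k a h : 0 < a -> Rabs h <= a / 2 ->
  Rabs (HH k (a + h) - HH k a + h * HH (S k) a) <= h ^ 2 * HH (S (S k)) (a / 2).
Proof.
  intros Ha Hh.
  assert (Hah : 0 < a + h) by (destruct (Rabs_le_between _ _ Hh) as [H1 _] || idtac; apply Rabs_def2b in Hh || idtac; 
     pose proof (Rle_abs (-h)); rewrite Rabs_Ropp in H; lra).
  destruct (HH_spec' k (a + h) Hah) as [C1 _].
  destruct (HH_spec' k a Ha) as [C2 _].
  destruct (HH_spec' (S k) a Ha) as [C3 _].
  destruct (HH_spec' (S (S k)) (a / 2) ltac:(lra)) as [_ [B4 _]].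
  apply (conv_bound3 _ _ _ _ _ _ h _ C1 C2 C3).
  intros b Hb. rewrite <- RInt_lin3 by apply ff_cont.
  eapply Rle_trans. 2:{ apply Rmult_le_compat_l. apply pow2_ge_0. apply (B4 b Hb). }
  rewrite <- (RInt_scal (V := R_CompleteNormedModule)) by (apply exRc, ff_cont).
  apply (norm_RInt_le (V := R_NormedModule) (fun t => ff k (a + h) t - ff k a t + h * ff (S k) a t)
     (fun t => scal (h ^ 2) (ff (S (S k)) (a / 2) t)) 0 b).
  - auto.
  - intros x _. apply ff_taylor; auto.
  - apply (RInt_correct (V := R_CompleteNormedModule)). apply exRc. intros t.
    apply cont_d. unfold ff, cosh. auto_derive. auto.
  - apply (RInt_correct (V := R_CompleteNormedModule)). apply exRc. intros t.
    apply cont_d. unfold scal; simpl. unfold mult; simpl. unfold ff, cosh. auto_derive. auto.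
Qed.

Lemma HH_derive k a : 0 < a -> is_derive (HH k) a (- HH (S k) a).
Proof.
  intros Ha. apply is_derive_Reals. intros eps Heps.
  set (C := HH (S (S k)) (a / 2)).
  assert (HC : 0 <= C) by (apply (HH_spec' (S (S k)) (a/2)); lra).
  assert (Hd : 0 < Rmin (a / 2) (eps / (C + 1))).
  { apply Rmin_glb_lt. lra. apply Rdiv_lt_0_compat; lra. }
  exists (mkposreal _ Hd). intros h Hh0 Hh. simpl in Hh.
  assert (Hh1 : Rabs h <= a / 2) by (pose proof (Rmin_l (a/2) (eps / (C + 1))); lra).
  assert (Hh2 : Rabs h < eps / (C + 1)) by (pose proof (Rmin_r (a/2) (eps / (C + 1))); lra).
  pose proof (HH_taylor k a h Ha Hh1) as T.
  replace ((HH k (a + h) - HH k a) / h - - HH (S k) a) with ((HH k (a + h) - HH k a + h * HH (S k) a) / h)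
    by (field; auto).
  unfold Rdiv. rewrite Rabs_mult, Rabs_inv.
  assert (Hpos : 0 < Rabs h) by (apply Rabs_pos_lt; auto).
  apply (Rmult_lt_reg_r (Rabs h)); auto. rewrite Rmult_assoc, Rinv_l, Rmult_1_r by lra.
  eapply Rle_lt_trans. apply T.
  replace (h ^ 2) with (Rabs h * Rabs h) by (rewrite <- Rabs_mult; rewrite Rabs_pos_eq; [ring| nra]).
  assert (Rabs h * C < eps).
  { apply (Rmult_lt_compat_r (C + 1)) in Hh2; [|lra]. unfold Rdiv in Hh2.
    rewrite Rmult_assoc, Rinv_l, Rmult_1_r in Hh2 by lra. nra. }
  apply (Rmult_lt_compat_r (Rabs h)) in H; auto. fold C. lra.
Qed.

Lemma dmult (f g : R -> R) x df dg : is_derive f x df -> is_derive g x dg ->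
  is_derive (fun y => f y * g y) x (df * g x + f x * dg).
Proof. intros. apply (is_derive_mult (K := R_AbsRing)); auto. intros; apply Rmult_comm. Qed.

Lemma dplus (f g : R -> R) x df dg : is_derive f x df -> is_derive g x dg ->
  is_derive (fun y => f y + g y) x (df + dg).
Proof. intros. apply (is_derive_plus (K := R_AbsRing) (V := R_NormedModule)); auto. Qed.

Lemma dsum (F : nat -> R -> R) (F' : nat -> R) N x :
  (forall k, (k <= N)%nat -> is_derive (F k) x (F' k)) ->
  is_derive (fun y => sum_f_R0 (fun k => F k y) N) x (sum_f_R0 F' N).
Proof.
  induction N; intros H.
  - simpl. apply H. lia.
  - simpl. apply dplus. apply IHN. intros; apply H; lia. apply H; lia.
Qed.

Lemma is_derive_eq (f : R -> R) x l1 l2 : is_derive f x l1 -> l1 = l2 -> is_derive f x l2.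
Proof. intros H <-. auto. Qed.

Definition term (m : R) (j k : nat) (r : R) : R := (/ r) ^ (S j) * HH k (m * r).

Lemma term_derive m j k r : 0 < m -> 0 < r ->
  is_derive (term m j k) r (- INR (S j) * term m (S j) k r - m * term m j (S k) r).
Proof.
  intros Hm Hr. unfold term.
  assert (H1 : is_derive (fun y => (/ y) ^ S j) r (INR (S j) * (- 1 / r ^ 2) * (/ r) ^ j)).
  { apply (is_derive_pow (fun y => / y) (S j) r). 
    replace (- 1 / r ^ 2) with (- 1 / (fun y => y) r ^ 2) by reflexivity.
    apply (is_derive_inv (fun y => y)). apply (is_derive_id (K := R_AbsRing)). lra. }
  assert (H2 : is_derive (fun y => HH k (m * y)) r (m * - HH (S k) (m * r))).
  { apply (is_derive_comp (K := R_AbsRing) (V := R_NormedModule) (HH k) (fun y => m * y)).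
    apply HH_derive. nra.
    auto_derive; auto; ring. }
  pose proof (dmult _ _ r _ _ H1 H2) as H3.
  eapply is_derive_eq. apply H3. cbv beta.
  change ((/ r) ^ S (S j)) with (/ r * (/ r * (/ r) ^ j)).
  change ((/ r) ^ S j) with (/ r * (/ r) ^ j). match goal with |- ?a = ?b => change (@eq R a b) end. field. lra.
Qed.

Definition cf (m : R) (n k : nat) : R :=
  m / (4 * PI ^ 2) * (-1) ^ n * INR (fact n) / INR (fact k) * m ^ k.

Definition V (m : R) (n : nat) (r : R) : R :=
  sum_f_R0 (fun k => cf m n k * term m (n - k) k r) n.

Lemma PI_ne0 : PI <> 0.
Proof. pose proof PI_RGT_0. lra. Qed.

Lemma cf_rec m n i : (i <= n)%nat ->
  cf m (S n) (S i) = - INR (n - i) * cf m n (S i) - m * cf m n i.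
Proof.
  intros Hi. unfold cf. rewrite !fact_simpl, !mult_INR, minus_INR by auto. rewrite !S_INR.
  pose proof (INR_fact_lt_0 i). pose proof (INR_fact_lt_0 n). pose proof (pos_INR i).
  pose proof PI_ne0.
  change ((-1) ^ S n) with (-1 * (-1) ^ n). change (m ^ S i) with (m * m ^ i).
  field. repeat split; try (apply Rgt_not_eq; lra); auto. 
Qed.

Lemma cf_rec0 m n : cf m (S n) 0 = - INR (S n) * cf m n 0.
Proof.
  unfold cf. rewrite !fact_simpl, !mult_INR. pose proof (INR_fact_lt_0 n). pose proof PI_ne0.
  change ((-1) ^ S n) with (-1 * (-1) ^ n). simpl fact. field. repeat split; try (apply Rgt_not_eq; lra); auto. simpl; lra.
Qed.

Lemma V_derive m n r : 0 < m -> 0 < r -> is_derive (V m n) r (V m (S n) r).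
Proof.
  intros Hm Hr.
  eapply is_derive_eq.
  { unfold V. apply (dsum (fun k y => cf m n k * term m (n - k) k y)).
    intros k Hk. apply is_derive_scal. apply term_derive; auto. }
  set (X := fun k => - INR (S n - k) * cf m n k * term m (S n - k) k r).
  set (Y := fun i => - m * cf m n i * term m (n - i) (S i) r).
  transitivity (sum_f_R0 X n + sum_f_R0 Y n).
  { rewrite <- plus_sum. apply sum_eq. intros k Hk. unfold X, Y.
    replace (S n - k)%nat with (S (n - k)) by lia. ring. }
  assert (HX : sum_f_R0 X (S n) = sum_f_R0 X n).
  { rewrite tech5. unfold X at 2. rewrite Nat.sub_diag. simpl INR. ring. }
  rewrite <- HX. rewrite (decomp_sum X (S n)) by lia. simpl pred.
  unfold V. rewrite (decomp_sum _ (S n)) by lia. simpl pred.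
  rewrite Rplus_assoc, <- plus_sum. f_equal.
  - unfold X. rewrite cf_rec0. rewrite Nat.sub_0_r. ring.
  - apply sum_eq. intros i Hi. unfold X, Y. rewrite cf_rec by auto.
    change (S n - S i)%nat with (n - i)%nat. ring.
Qed.

Lemma bessel_HH z : besselK1 z = HH 0 z.
Proof. unfold besselK1, HH, ff. f_equal. extensionality t. ring. Qed.

Lemma Dn_formula m n : 0 < m -> forall r, 0 < r -> Derive_n (u_two_point m) n r = V m n r.
Proof.
  intros Hm. induction n; intros r Hr.
  - simpl. unfold u_two_point, V, cf, term. simpl sum_f_R0. rewrite bessel_HH. simpl.
    field. split; [apply Rgt_not_eq; lra | apply PI_ne0].
  - simpl. rewrite (Derive_ext_loc _ (V m n)).
    + apply is_derive_unique, V_derive; auto.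
    + exists (mkposreal r Hr). intros y Hy. apply IHn.
      change (Rabs (y - r) < r) in Hy. apply Rabs_def2 in Hy. lra.
Qed.

Lemma geom4 n : sum_f_R0 (fun k => 4 ^ k) n <= 4 ^ (S n) / 3.
Proof.
  induction n. simpl. lra. rewrite tech5. 
  change (4 ^ S (S n)) with (4 * 4 ^ S n). lra.
Qed.

Lemma term_bound m R0 n k r : 0 < m -> 0 < R0 -> R0 <= r -> (k <= n)%nat ->
  Rabs (cf m n k * term m (n - k) k r) <=
  INR (fact n) / (4 * PI ^ 2 * m) * 12 * 4 ^ k * Rmax m (1 / R0) ^ (n + 3) * exp (- (m * r)).
Proof.
  intros Hm HR Hr Hk.
  set (M := Rmax m (1 / R0)).
  assert (HMm : m <= M) by apply Rmax_l.
  assert (HMR : 1 / R0 <= M) by apply Rmax_r.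
  assert (HM : 0 < M) by lra.
  set (rho := m / M).
  assert (Hrho : 0 < rho <= 1).
  { unfold rho. split. apply Rdiv_lt_0_compat; lra. apply (Rmult_le_reg_r M); auto. unfold Rdiv.
    rewrite Rmult_assoc, Rinv_l by lra. lra. }
  assert (Hra : rho <= m * r).
  { unfold rho. unfold Rdiv. apply Rmult_le_compat_l. lra.
    assert (/ M <= / (1 / R0)) by (apply Rinv_le_contravar; auto; apply Rdiv_lt_0_compat; lra).
    replace (/ (1 / R0)) with R0 in H by (field; lra). lra. }
  destruct (HH_spec k (m * r) rho Hrho Hra) as [_ [_ [HH0 HHb]]].
  set (a := m * r) in *.
  set (Kk := INR (fact k) * 12 * 4 ^ k * exp (- a)).
  assert (HKk : 0 <= Kk).
  { unfold Kk. pose proof (INR_fact_lt_0 k). pose proof (pow_lt 4 k ltac:(lra)). pose proof (exp_pos (-a)).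
    apply Rmult_le_pos; [|lra]. nra. }
  set (Q := m ^ S k * HH k a).
  assert (HQ : Q <= M ^ S k * (M / m) * Kk).
  { unfold Q. replace m with (rho * M) at 1 by (unfold rho; field; lra).
    rewrite Rpow_mult_distr.
    replace (rho ^ S k * M ^ S k * HH k a) with (M ^ S k * (rho ^ S k * HH k a)) by ring.
    rewrite Rmult_assoc. apply Rmult_le_compat_l. apply pow_le; lra.
    eapply Rle_trans. apply HHb. fold Kk. unfold rho. right. field. split; lra. }
  assert (HQ0 : 0 <= Q) by (unfold Q; apply Rmult_le_pos; [apply pow_le|]; lra).
  assert (Eq : cf m n k * term m (n - k) k r =
     (-1) ^ n * (INR (fact n) / (4 * PI ^ 2 * INR (fact k))) * (/ r) ^ S (n - k) * Q).
  { unfold cf, term, Q. fold a. simpl (m ^ S k). pose proof (INR_fact_lt_0 k). pose proof PI_ne0.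
    field. repeat split; try (apply Rgt_not_eq; lra); auto. }
  rewrite Eq. rewrite !Rabs_mult, pow_1_abs, Rmult_1_l.
  assert (HC : 0 <= INR (fact n) / (4 * PI ^ 2 * INR (fact k))).
  { pose proof (INR_fact_lt_0 k). pose proof (INR_fact_lt_0 n). pose proof PI_RGT_0.
    apply Rlt_le, Rdiv_lt_0_compat; auto. apply Rmult_lt_0_compat; auto. nra. }
  assert (Hr0 : 0 < r) by lra.
  rewrite (Rabs_pos_eq (INR _ / _)) by auto.
  rewrite (Rabs_pos_eq ((/ r) ^ _)) by (apply pow_le, Rlt_le, Rinv_0_lt_compat; lra).
  rewrite (Rabs_pos_eq Q) by auto.
  assert (Hir : (/ r) ^ S (n - k) <= M ^ S (n - k)).
  { apply pow_incr. split. apply Rlt_le, Rinv_0_lt_compat; lra.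
    assert (/ r <= / R0) by (apply Rinv_le_contravar; lra). unfold Rdiv in HMR. lra. }
  assert (0 <= (/ r) ^ S (n - k)) by (apply pow_le, Rlt_le, Rinv_0_lt_compat; lra).
  eapply Rle_trans.
  { apply Rmult_le_compat. apply Rmult_le_pos; auto. auto.
    apply Rmult_le_compat_l. auto. apply Hir. apply HQ. }
  replace (n + 3)%nat with ((S (n - k) + S k) + 1)%nat by lia. rewrite !pow_add, pow_1.
  unfold Kk. fold M. pose proof (INR_fact_lt_0 k). pose proof PI_ne0.
  right. field. repeat split; try (apply Rgt_not_eq; lra); auto.
Qed.

Theorem mainTheorem10 (m R0 : R) (hm : 0 < m) (hR : 0 < R0) :
  forall (r : R) (n : nat), R0 <= r ->
    Rabs (Derive_n (u_two_point m) n r)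
      <= (2 / (25 * m)) * (4 * Rmax m (1 / R0)) ^ (n + 3) * INR (fact n)
         * exp (- m * r).
Proof.
  intros r n Hr.
  rewrite Dn_formula by lra. unfold V.
  set (M := Rmax m (1 / R0)).
  set (Cst := INR (fact n) / (4 * PI ^ 2 * m) * 12 * M ^ (n + 3) * exp (- (m * r))).
  eapply Rle_trans. apply sum_f_R0_triangle.
  eapply Rle_trans.
  { apply (sum_Rle _ (fun k => 4 ^ k * Cst)). intros k Hk.
    eapply Rle_trans. apply (term_bound m R0 n k r); auto. unfold Cst. fold M. right. ring. }
  rewrite <- (scal_sum (fun k => 4 ^ k) n Cst).
  assert (HC : 0 <= Cst).
  { unfold Cst. pose proof (INR_fact_lt_0 n). pose proof PI_RGT_0. pose proof (exp_pos (- (m * r))).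
    assert (0 < M) by (pose proof (Rmax_l m (1 / R0)); fold M in H2; lra).
    pose proof (pow_lt M (n + 3) H2).
    apply Rmult_le_pos; [|lra]. apply Rmult_le_pos; [|lra]. apply Rmult_le_pos; [|lra].
    apply Rlt_le, Rdiv_lt_0_compat; auto. apply Rmult_lt_0_compat; [|lra]. nra. }
  eapply Rle_trans. apply Rmult_le_compat_l. apply HC. apply geom4.
  replace (- m * r) with (- (m * r)) by ring.
  unfold Cst. rewrite Rpow_mult_distr.
  replace (4 ^ (n + 3)) with (4 ^ S n * 16) by (replace (n + 3)%nat with (S n + 2)%nat by lia; rewrite pow_add; simpl; ring).
  set (X := INR (fact n) * M ^ (n + 3) * exp (- (m * r)) * 4 ^ S n).
  assert (HX : 0 <= X).
  { unfold X. pose proof (INR_fact_lt_0 n). pose proof (exp_pos (- (m * r))).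
    assert (0 < M) by (pose proof (Rmax_l m (1 / R0)); fold M in H1; lra).
    pose proof (pow_lt M (n + 3) H1). pose proof (pow_lt 4 (S n) ltac:(lra)).
    apply Rmult_le_pos; [|lra]. apply Rmult_le_pos; [|lra]. apply Rmult_le_pos; lra. }
  pose proof PI_RGT_0. pose proof PI2_1.
  transitivity (X / (PI ^ 2 * m)).
  { right. unfold X. field. split; lra. }
  transitivity (X * (32 / (25 * m))).
  2:{ right. unfold X. field. lra. }
  unfold Rdiv. apply Rmult_le_compat_l. auto.
  rewrite Rinv_mult. rewrite Rinv_mult.
  assert (/ PI ^ 2 <= 32 * / 25).
  { assert (4 <= PI ^ 2) by nra. apply (Rmult_le_reg_r (PI ^ 2)). nra.
    rewrite Rinv_l by nra. lra. }
  pose proof (Rinv_0_lt_compat m hm). nra.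
Qed.
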